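(* Every BMDP $\mathcal B$ has an optimal static strategy: there is a static strategy $\sigma^*$ such that $\mathrm{ETotal}_*(q,\sigma^* )=\mathrm{ETotal}_*(q)$ for every type $q\in\mathcal T$.
   Context: A branching Markov decision process (BMDP) is a tuple $\mathcal B=(\mathcal T,A,p,c)$ where $\mathcal T$ is a finite set of types, $A$ is a finite set of actions, $p:\mathcal T\times A\to \mathrm{Dist}(\mathcal T^* )$ is a partial function assigning to some pairs $(q,a)$ a probability distribution with finite support over the set $\mathcal T^*$ of finite lists of types, and $c:\mathcal T\times A\to\mathbb R_{>0}$ is a cost function with strictly positive values. $A(q)$ denotes the (nonempty) set of actions $a$ for which $p(q,a)$ is defined. For a list $\alpha$, $|\alpha|$ is its length and $\alpha_i$ its $i$-th element; $\varepsilon$ is the empty list. Semantics: the BMDP induces an MDP whose states are lists $\alpha\in\mathcal T^*$. In state $\alpha$ the enabled actions are pairs $(i,a)$ with $1\le i\le|\alpha|$ and $a\in A(\alpha_i)$; taking $(i,a)$ incurs cost $c(\alpha_i,a)$ and moves to $\alpha_1\cdots\alpha_{i-1}\cdot\beta\cdot\alpha_{i+1}\cdots\alpha_{|\alpha|}$ with probability $p(\alpha_i,a)(\beta)$. The state $\varepsilon$ has no actions and is absorbing with no further cost. A strategy maps each finite history to a probability distribution over actions enabled in its last state; a strategy $\sigma$ and initial state $\alpha$ induce a probability measure on runs. $\mathrm{ETotal}_N(\alpha,\sigma)$ is the expected sum of costs in the first $N$ steps, $\mathrm{ETotal}_*(\alpha,\sigma)=\lim_{N\to\infty}\mathrm{ETotal}_N(\alpha,\sigma)\in[0,\infty]$,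 and $\mathrm{ETotal}_*(\alpha)=\inf_\sigma\mathrm{ETotal}_*(\alpha,\sigma)$ over all strategies. A strategy is static if there is a map $s:\mathcal T\to A$ with $s(q)\in A(q)$ such that, in every history whose last state $\alpha$ is nonempty, the strategy chooses (with probability 1) the action $(1,s(\alpha_1))$. *)

(* Defs.v *)
From HB Require Import structures.
From mathcomp Require Import all_boot all_order all_algebra.
From mathcomp Require Import all_classical all_reals all_analysis.
Set Implicit Arguments. Unset Strict Implicit. Unset Printing Implicit Defensive.
Import Order.TTheory GRing.Theory Num.Theory.
Local Open Scope ring_scope.

Section BMDP.
Variables (R : realType) (T A : finType).

(** A finite-support distribution over T^* (lists of types) is given by a
    finite list of (weight, list) pairs; the probability of beta is the total
    weight of the entries whose second component is beta. *)
Definition fdist := seq (R * seq T).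

Definition fdist_wf (d : fdist) : Prop :=
  (forall x, x \in d -> 0 <= x.1) /\ \sum_(x <- d) x.1 = 1.

(** BMDP (T, A, p, c): p q a = None means p(q,a) undefined (a \notin A(q)). *)
Definition BMDP_wf (p : T -> A -> option fdist) (c : T -> A -> R) : Prop :=
  [/\ forall q a d, p q a = Some d -> fdist_wf d,
      forall q, exists a, p q a <> None
    & forall q a, 0 < c q a].

(** Finite histories of the induced MDP: an initial state followed by the
    list of (action, next state) steps.  Actions (i,a) use 0-based positions
    i (position i here is position i+1 in the paper). *)
Definition hist := (seq T * seq ((nat * A) * seq T))%type.

Definition last_state (h : hist) : seq T := last h.1 [seq x.2 | x <- h.2].

Definition extend (h : hist) (ia : nat * A) (beta : seq T) : hist :=
  (h.1, rcons h.2 (ia, beta)).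

Definition succ_state (alpha : seq T) (i : nat) (beta : seq T) : seq T :=
  take i alpha ++ beta ++ drop i.+1 alpha.

(** A (randomized, history-dependent) strategy: sigma h i a is the
    probability of choosing action (i,a) after history h. *)
Definition strategy := hist -> nat -> A -> R.

Definition valid_strategy (p : T -> A -> option fdist) (sigma : strategy) : Prop :=
  forall h, last_state h != [::] ->
    [/\ forall i a, 0 <= sigma h i a,
        (forall i a, sigma h i a != 0 ->
           exists Hi : (i < size (last_state h))%N,
             p (tnth (in_tuple (last_state h)) (Ordinal Hi)) a <> None)
      & \sum_(i < size (last_state h)) \sum_(a : A) sigma h i a = 1].

Fixpoint ETotalN (p : T -> A -> option fdist) (c : T -> A -> R)
    (sigma : strategy) (N : nat) (h : hist) {struct N} : R :=
  match N with
  | 0 => 0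
  | N'.+1 =>
    let alpha := last_state h in
    \sum_(i < size alpha) \sum_(a : A)
      sigma h i a *
      match p (tnth (in_tuple alpha) i) a with
      | None => 0
      | Some d =>
          c (tnth (in_tuple alpha) i) a +
          \sum_(x <- d) x.1 *
             ETotalN p c sigma N' (extend h (val i, a) (succ_state alpha i x.2))
      end
  end.

Local Open Scope ereal_scope.

Definition ETotal_star p c (sigma : strategy) (alpha : seq T) : \bar R :=
  limn (fun N => (ETotalN p c sigma N (alpha, [::]))%:E).

Definition ETotal_opt p c (alpha : seq T) : \bar R :=
  ereal_inf [set ETotal_star p c sigma alpha | sigma in valid_strategy p].

Definition static_strategy (s : T -> A) : strategy :=
  fun h i a =>
    match last_state h with
    | [::] => 0%R
    | q :: _ => if (i == 0)%N && (a == s q) then 1%R else 0%R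
    end.

Definition static_choice (p : T -> A -> option fdist) (s : T -> A) : Prop :=
  forall q, p q (s q) <> None.

End BMDP.

(* Main.v *)
Require Import Defs.
From HB Require Import structures.
From mathcomp Require Import all_boot all_order all_algebra.
From mathcomp Require Import all_classical all_reals all_analysis.
From mathcomp Require Import lra zify.
Unset Printing Implicit Defensive.
Import Order.TTheory GRing.Theory Num.Theory.
Local Open Scope ring_scope.

Section Proof.
Variables (R : realType) (T A : finType).
Variables (p : T -> A -> option (fdist R T)) (c : T -> A -> R).
Hypothesis wf : BMDP_wf p c.
Variable a0 : T -> A.
Hypothesis a0P : forall q, p q (a0 q) <> None.

Lemma a0S q : isSome (p q (a0 q)).
Proof. by case E: (p q (a0 q)) => //; have := a0P q; rewrite E. Qed.

Lemma wf_w q a d x : p q a = Some d -> x \in d -> 0 <= x.1.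
Proof. by case: wf => H _ _ Hd; case: (H _ _ _ Hd) => H1 _; apply: H1. Qed.

Lemma wf_sum q a d : p q a = Some d -> \sum_(x <- d) x.1 = 1.
Proof. by case: wf => H _ _ Hd; case: (H _ _ _ Hd). Qed.

Lemma wf_c q a : 0 < c q a.
Proof. by case: wf. Qed.

Definition gval (f : T -> R) q a : R :=
  if p q a is Some d then c q a + \sum_(x <- d) x.1 * \sum_(t <- x.2) f t else 0.

Fixpoint uk (k : nat) (q : T) : R :=
  if k is k'.+1 then
    \big[Num.min/gval (uk k') q (a0 q)]_(a | isSome (p q a)) gval (uk k') q a
  else 0.

Lemma gval_ge0 f q a : (forall t, 0 <= f t) -> 0 <= gval f q a.
Proof.
move=> f0; rewrite /gval; case E: (p q a) => [d|] //.
apply: addr_ge0; first exact: ltW (wf_c q a).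
rewrite big_seq; apply: sumr_ge0 => x xd; apply: mulr_ge0; first exact: wf_w E xd.
by apply: sumr_ge0.
Qed.

Lemma gval_mono f g q a : (forall t, f t <= g t) -> gval f q a <= gval g q a.
Proof.
move=> fg; rewrite /gval; case E: (p q a) => [d|] //.
rewrite lerD2l big_seq [X in _ <= X]big_seq; apply: ler_sum => x xd.
by apply: ler_wpM2l; [exact: wf_w E xd | apply: ler_sum].
Qed.

Lemma uk_le_gval k q a : isSome (p q a) -> uk k.+1 q <= gval (uk k) q a.
Proof. by move=> H; rewrite /= (bigD1 a) //= ge_min lexx. Qed.

Lemma uk_gt k q r : (forall a, isSome (p q a) -> r < gval (uk k) q a) -> r < uk k.+1 q.
Proof.
move=> H /=; apply: (big_ind (fun x => r < x)).
- by apply: H; apply: a0S.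
- by move=> x y rx ry; rewrite lt_min rx ry.
- by move=> a /H.
Qed.

Lemma uk_ge0 k q : 0 <= uk k q.
Proof.
elim: k q => [//|k IH] q /=; apply: (big_ind (fun x => 0 <= x)).
- exact: gval_ge0.
- by move=> x y rx ry; rewrite le_min rx ry.
- by move=> a _; apply: gval_ge0.
Qed.

Lemma uk_mono1 k q : uk k q <= uk k.+1 q.
Proof.
elim: k q => [|k IH] q; first exact: uk_ge0.
rewrite [uk k.+2 q]/=; apply: (big_ind (fun x => uk k.+1 q <= x)).
- apply: le_trans (gval_mono _ _ _ _ IH).
  by apply: uk_le_gval; apply: a0S.
- by move=> x y rx ry; rewrite le_min rx ry.
- by move=> a Ha; apply: le_trans (gval_mono _ _ _ _ IH); apply: uk_le_gval.
Qed.

Lemma uk_mono k l q : (k <= l)%N -> uk k q <= uk l q.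
Proof.
move=> /subnK <-; elim: (l - k)%N => [|n IH] //.
by rewrite addSn; apply: le_trans IH (uk_mono1 _ _).
Qed.


Lemma last_extend (h : hist T A) ia b : last_state (extend h ia b) = b.
Proof. by rewrite /last_state /extend /= map_rcons last_rcons. Qed.

Lemma last_init (al : seq T) : last_state ((al, [::]) : hist T A) = al.
Proof. by []. Qed.

Lemma ne_of_ord (s : seq T) (i : 'I_(size s)) : s != [::].
Proof. by case: s i => [[]|]. Qed.

Lemma ET_mono (sigma : strategy R T A) : valid_strategy p sigma ->
  forall N h, ETotalN p c sigma N h <= ETotalN p c sigma N.+1 h.
Proof.
move=> v; elim=> [|N IH] h.
  rewrite [ETotalN _ _ _ 1 _]/=; apply: sumr_ge0 => i _; apply: sumr_ge0 => a _.
  have ne := @ne_of_ord _ i.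
  have [s0 _ _] := v h ne.
  apply: mulr_ge0 => //; case: (p _ a) => [d|] //.
  rewrite big1 ?addr0; first exact: ltW (wf_c _ _).
  by move=> x _; rewrite mulr0.
rewrite [ETotalN _ _ _ N.+1 _]/= [ETotalN _ _ _ N.+2 _]/=.
apply: ler_sum => i _; apply: ler_sum => a _.
have ne := @ne_of_ord _ i.
have [s0 _ _] := v h ne.
apply: ler_wpM2l => //; case E: (p _ a) => [d|] //.
rewrite lerD2l big_seq [X in _ <= X]big_seq; apply: ler_sum => x xd.
by apply: ler_wpM2l; [exact: wf_w E xd | apply: IH].
Qed.

Section Potential.
Variable k : nat.

Definition Lmax : nat := (\sum_(q : T) \sum_(a : A)
  (if p q a is Some d then \sum_(x <- d) size x.2 else 0))%N.

Lemma size_le_L q a d x : p q a = Some d -> x \in d -> (size x.2 <= Lmax)%N.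
Proof.
move=> E xd; rewrite /Lmax (bigD1 q) //= (bigD1 a) //= E (big_rem x) //=.
apply: leq_trans (leq_addr _ _); apply: leq_trans (leq_addr _ _).
exact: leq_addr.
Qed.

Definition kap (d : nat) : R := \sum_(e < k - d) (Lmax%:R ^+ e).

Lemma kap_ge0 d : 0 <= kap d.
Proof. by apply: sumr_ge0 => e _; apply: exprn_ge0. Qed.

Lemma kap0 d : (k <= d)%N -> kap d = 0.
Proof. by move=> kd; rewrite /kap (eqP kd) big_ord0. Qed.

Lemma kap_rec d : (d < k)%N -> kap d = 1 + Lmax%:R * kap d.+1.
Proof.
move=> dk; rewrite /kap -(subnSK dk) big_ord_recl expr0 mulr_sumr.
by congr (_ + _); apply: eq_bigr => e _; rewrite exprS.
Qed.

Lemma kap_ge1 d : (d < k)%N -> 1 <= kap d.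
Proof.
move=> dk; rewrite kap_rec // lerDl; apply: mulr_ge0 => //; exact: kap_ge0.
Qed.

Definition Phi (z : seq (T * nat)) : R := \sum_(y <- z) uk (k - y.2) y.1.
Definition Kz (z : seq (T * nat)) : R := \sum_(y <- z) kap y.2.
Definition M : R := \sum_(t : T) uk k t.
Definition cmin : R := \big[Num.min/1]_(q : T) \big[Num.min/1]_(a : A) c q a.
Definition rho : R := cmin / (M + cmin + 1).
Definition Fpot (N : nat) z : R := Phi z - M * Num.max 0 (Kz z - rho * N%:R).

Lemma cmin_pos : 0 < cmin.
Proof.
apply: (big_ind (fun x => 0 < x)) => //; first by move=> x y *; rewrite lt_min; apply/andP.
move=> q _; apply: (big_ind (fun x => 0 < x)) => //; first by move=> x y *; rewrite lt_min; apply/andP.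
by move=> a _; apply: wf_c.
Qed.

Lemma cmin_le q a : cmin <= c q a.
Proof. by rewrite /cmin (bigD1 q) //= ge_min (bigD1 a) //= ge_min lexx. Qed.

Lemma M_ge0 : 0 <= M.
Proof. by apply: sumr_ge0 => t _; apply: uk_ge0. Qed.

Lemma uk_le_M d t : uk (k - d) t <= M.
Proof.
apply: le_trans (uk_mono _ _ _ (leq_subr _ _)) _.
rewrite /M (bigD1 t) //= lerDl; apply: sumr_ge0 => *; exact: uk_ge0.
Qed.

Lemma rho_pos : 0 < rho.
Proof.
have := cmin_pos; have := M_ge0 => *.
by apply: divr_gt0 => //; lra.
Qed.

Lemma rho_le1 : rho <= 1.
Proof.
have := cmin_pos; have := M_ge0 => *.
by rewrite ler_pdivrMr; lra.
Qed.

Lemma Mrho : M * rho <= cmin.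
Proof.
have := cmin_pos; have := M_ge0 => *.
rewrite mulrA ler_pdivrMr; last lra.
by nra.
Qed.

Lemma Kz_ge0 z : 0 <= Kz z.
Proof. by apply: sumr_ge0 => y _; apply: kap_ge0. Qed.

Lemma Phi_le z : Phi z <= M * Kz z.
Proof.
rewrite /Phi /Kz mulr_sumr; apply: ler_sum => y _.
case: (ltnP y.2 k) => H.
  by apply: le_trans (uk_le_M _ _) _; apply: ler_peMr; [apply: M_ge0 | apply: kap_ge1].
by rewrite kap0 // mulr0; move: H; rewrite -subn_eq0 => /eqP ->.
Qed.


Definition succ_z (y0 : T * nat) (z : seq (T * nat)) (i : nat) (b : seq T) :=
  take i z ++ [seq (t, (nth y0 z i).2.+1) | t <- b] ++ drop i.+1 z.

Lemma sum_succ_z (f : T * nat -> R) y0 z i b : (i < size z)%N ->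
  \sum_(y <- succ_z y0 z i b) f y =
  \sum_(y <- z) f y - f (nth y0 z i) + \sum_(t <- b) f (t, (nth y0 z i).2.+1).
Proof.
move=> Hi.
have -> : \sum_(y <- z) f y = \sum_(y <- take i z) f y + f (nth y0 z i) +
   \sum_(y <- drop i.+1 z) f y.
  rewrite -{1}(cat_take_drop i z) (drop_nth y0) // big_cat big_cons; apply: addrA.
by rewrite /succ_z !big_cat big_map /=; lra.
Qed.

Lemma unzip1_succ_z y0 z i b :
  unzip1 (succ_z y0 z i b) = succ_state (unzip1 z) i b.
Proof.
rewrite /succ_z /succ_state /unzip1 !map_cat map_take map_drop; congr (_ ++ (_ ++ _)).
by rewrite -map_comp map_id.
Qed.

Lemma max_shift (x r : R) : 0 <= r -> Num.max 0 x <= Num.max 0 (x - r) + r.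
Proof.
move=> r0; rewrite ge_max; apply/andP; split.
  by apply: addr_ge0 => //; rewrite le_max lexx.
rewrite -lerBlDr; by rewrite le_max lexx orbT.
Qed.

Lemma max_mono (x y : R) : x <= y -> Num.max 0 x <= Num.max 0 y.
Proof. by move=> xy; rewrite ge_max !le_max lexx xy orbT. Qed.

Lemma key N z i y0 a d : (i < size z)%N -> p (nth y0 z i).1 a = Some d ->
  Fpot N.+1 z <= c (nth y0 z i).1 a +
     \sum_(x <- d) x.1 * Fpot N (succ_z y0 z i x.2).
Proof.
move=> Hi E; set q := (nth y0 z i).1; set dep := (nth y0 z i).2.
have sw := wf_sum _ _ _ E.
have w0 : forall x, x \in d -> 0 <= x.1 by move=> x; apply: wf_w _ _ _ _ E.
have M0 := M_ge0; have r0 := rho_pos; have r1 := rho_le1.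
have PhiE : forall b, Phi (succ_z y0 z i b) =
    Phi z - uk (k - dep) q + \sum_(t <- b) uk (k - dep.+1) t.
  by move=> b; rewrite /Phi sum_succ_z.
have KE : forall b, Kz (succ_z y0 z i b) =
    Kz z - kap dep + (size b)%:R * kap dep.+1.
  move=> b; rewrite /Kz sum_succ_z //=; congr (_ + _).
  elim: (b) => [|t b' IH]; first by rewrite big_nil mul0r.
  by rewrite big_cons IH /= -natr1 mulrDl mul1r addrC.
rewrite /Fpot.
case: (ltnP dep k) => Hdk.
  set Mx := M * Num.max 0 (Kz z - rho * N.+1%:R).
  have step : forall x, x \in d -> Phi z - uk (k - dep) q +
      \sum_(t <- x.2) uk (k - dep.+1) t - Mx <=
      Phi (succ_z y0 z i x.2) - M * Num.max 0 (Kz (succ_z y0 z i x.2) - rho * N%:R).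
    move=> x xd; rewrite PhiE lerD2l lerN2; apply: ler_wpM2l => //.
    apply: max_mono; rewrite KE (kap_rec _ Hdk).
    have sL := size_le_L _ _ _ _ E xd.
    have kp := kap_ge0 dep.+1.
    have : (size x.2)%:R * kap dep.+1 <= Lmax%:R * kap dep.+1.
      by apply: ler_wpM2r => //; rewrite ler_nat.
    rewrite -natr1 mulrDr mulr1; nra.
  apply: le_trans (_ : _ <= c q a + \sum_(x <- d) x.1 * (Phi z - uk (k - dep) q +
      \sum_(t <- x.2) uk (k - dep.+1) t - Mx)) _; last first.
    rewrite lerD2l big_seq [X in _ <= X]big_seq; apply: ler_sum => x xd.
    by apply: ler_wpM2l; [apply: w0 | apply: step].
  have : uk (k - dep) q <= gval (uk (k - dep.+1)) q a.
    by rewrite -(subnSK Hdk); apply: uk_le_gval; rewrite E.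
  rewrite /gval E.
  have -> : \sum_(x <- d) x.1 * (Phi z - uk (k - dep) q +
      \sum_(t <- x.2) uk (k - dep.+1) t - Mx) =
      (Phi z - uk (k - dep) q - Mx) + \sum_(x <- d) x.1 * \sum_(t <- x.2) uk (k - dep.+1) t.
    rewrite -[Phi z - _ - Mx]mul1r -sw mulr_suml -big_split /=.
    by apply: eq_bigr => x _; rewrite -mulrDr; congr (_ * _); lra.
  rewrite /Mx; lra.
have u0 : forall n, (k <= n)%N -> uk (k - n) = fun _ => 0.
  by move=> n kn; move: kn; rewrite -subn_eq0 => /eqP ->.
have Ex : forall x, x \in d -> Phi (succ_z y0 z i x.2) = Phi z.
  by move=> x _; rewrite PhiE !u0 ?(leqW Hdk) // big1 // subr0 addr0.
have Kx : forall x, x \in d -> Kz (succ_z y0 z i x.2) = Kz z.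
  by move=> x _; rewrite KE !kap0 ?(leqW Hdk) // mulr0 subr0 addr0.
rewrite (eq_big_seq (fun x => x.1 * (Phi z - M * Num.max 0 (Kz z - rho * N%:R)))); last first.
  by move=> x xd; rewrite Ex // Kx.
rewrite -mulr_suml sw mul1r.
have Hs := max_shift (Kz z - rho * N%:R) rho (ltW r0).
have HM := ler_wpM2l M0 Hs.
have := Mrho; have := cmin_le q a.
rewrite -natr1 mulrDr mulr1 opprD addrA.
nra.
Qed.



Lemma ord_lt_size (s : seq T) (z : seq (T * nat)) (i : 'I_(size s)) :
  unzip1 z = s -> (i < size z)%N.
Proof.
move=> Hs; have := ltn_ord i; move: (nat_of_ord i) => n Hn.
by move: Hn; rewrite -Hs /unzip1 size_map.
Qed.

Lemma nth_unzip (s : seq T) (z : seq (T * nat)) (i : 'I_(size s)) y0 :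
  unzip1 z = s -> (nth y0 z i).1 = tnth (in_tuple s) i.
Proof.
move=> Hs; have Hz := @ord_lt_size _ _ i Hs.
rewrite (tnth_nth y0.1) /=; move: Hz; move: (nat_of_ord i) => n Hn.
by rewrite -Hs /unzip1 (nth_map y0).
Qed.

Lemma lower (sigma : strategy R T A) : valid_strategy p sigma ->
  forall N h z, unzip1 z = last_state h -> Fpot N z <= ETotalN p c sigma N h.
Proof.
move=> v; elim=> [|N IH] h z Hz.
  rewrite [ETotalN _ _ _ 0 _]/= /Fpot mulr0 subr0 (max_r (Kz_ge0 z)).
  by have := Phi_le z; lra.
have [E|ne] := eqVneq (last_state h) [::].
  have z0 : z = [::] by move: Hz; rewrite E; case: z.
  rewrite z0 /Fpot /Phi /Kz !big_nil sub0r max_l; last first.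
    have r0 := rho_pos; have n0 : (0:R) <= N.+1%:R by []. nra.
  rewrite mulr0 oppr0 [ETotalN _ _ _ N.+1 _]/= big1 // => i _.
  by have := @ne_of_ord _ i; rewrite {1}E.
have [s0 sen ssum] := v h ne.
rewrite [ETotalN _ _ _ N.+1 _]/= -[Fpot N.+1 z]mulr1 -ssum mulr_sumr.
apply: ler_sum => i _; rewrite mulr_sumr; apply: ler_sum => a _.
rewrite mulrC; have [->|nz] := eqVneq (sigma h i a) 0; first by rewrite !mul0r.
apply: ler_wpM2l => //.
have [Hi en] := sen i a nz.
have eq : Ordinal Hi = i by apply: val_inj.
rewrite eq in en.
case E: (p (tnth (in_tuple (last_state h)) i) a) en => [d|] // _.
set y0 := (tnth (in_tuple (last_state h)) i, 0%N).
have Hiz := @ord_lt_size _ _ i Hz.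
have Hn := @nth_unzip _ _ i y0 Hz.
have E' : p (nth y0 z i).1 a = Some d by rewrite Hn.
apply: le_trans (key N z i y0 a d Hiz E') _.
rewrite Hn lerD2l big_seq [X in _ <= X]big_seq; apply: ler_sum => x xd.
apply: ler_wpM2l; first exact: wf_w _ _ _ _ E xd.
by apply: IH; rewrite last_extend unzip1_succ_z Hz.
Qed.

End Potential.

Local Open Scope ereal_scope.

Definition uE q : \bar R := limn (fun n => (uk n q)%:E).

Lemma uk_nd q : {homo (fun n => (uk n q)%:E) : n m / (n <= m)%N >-> n <= m}.
Proof. by move=> n m nm; rewrite lee_fin; apply: uk_mono. Qed.

Lemma uE_cvg q : cvgn (fun n => (uk n q)%:E).
Proof. exact: ereal_nondecreasing_is_cvgn (uk_nd q). Qed.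

Lemma uk_le_uE n q : (uk n q)%:E <= uE q.
Proof.
apply: lime_ge; first exact: uE_cvg.
by exists n => // m /= nm; rewrite lee_fin; apply: uk_mono.
Qed.

Lemma uE_ge0 q : 0 <= uE q.
Proof. exact: (uk_le_uE 0 q). Qed.

Lemma ET_cvg (sigma : strategy R T A) al : valid_strategy p sigma ->
  cvgn (fun N => (ETotalN p c sigma N (al, [::]))%:E).
Proof.
move=> v; apply: ereal_nondecreasing_is_cvgn.
by apply/nondecreasing_seqP => n; rewrite lee_fin; apply: ET_mono.
Qed.

Lemma lower_star (sigma : strategy R T A) q : valid_strategy p sigma ->
  uE q <= ETotal_star p c sigma [:: q].
Proof.
move=> v; apply: lime_le; first exact: uE_cvg.
exists 0%N => // k _ /=.
apply: lime_ge; first exact: ET_cvg.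
have r0 := rho_pos k.
exists (Num.Def.archi_bound (kap k 0 / rho k)) => // N /= HN.
have := lower k sigma v N ([:: q], [::]) [:: (q, 0%N)] erefl.
rewrite /Fpot /Phi /Kz !big_seq1 subn0 /= max_l.
  by rewrite mulr0 subr0 lee_fin.
have := archi_boundP (divr_ge0 (kap_ge0 k 0) (ltW r0)).
rewrite ltr_pdivrMr //.
have : ((Num.Def.archi_bound (kap k 0 / rho k))%:R <= N%:R :> R)%R by rewrite ler_nat.
move=> H1 H2; rewrite subr_le0; nra.
Qed.


Section Static.
Variable s : T -> A.
Hypothesis Hs : forall q, isSome (p q (s q)).
Hypothesis Hs2 : forall q d, p q (s q) = Some d -> uE q != +oo ->
  (c q (s q))%:E + \sum_(x <- d) (x.1)%:E * \sum_(t <- x.2) uE t <= uE q.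

Lemma static_valid : valid_strategy p (@static_strategy R T A s).
Proof.
move=> h; rewrite /static_strategy; case E: (last_state h) => [//|q rest] _.
split.
- by move=> i a; case: ifP.
- move=> i a; case: ifP => [/andP [/eqP i0 /eqP ->] _ | _]; last by move/eqP.
  subst i.
  exists isT; rewrite (tnth_nth q) /=.
  by case: (p q (s q)) (Hs q).
- rewrite big_ord_recl [X in (_ + X)%R]big1 ?addr0; last by move=> j _; apply: big1.
  rewrite (bigD1 (s q)) //= eqxx [X in (_ + X)%R]big1 ?addr0 // => a /negbTE H.
  by rewrite H.
Qed.

Lemma static_ub N h :
  (ETotalN p c (@static_strategy R T A s) N h)%:E <= \sum_(t <- last_state h) uE t.
Proof.
elim: N h => [|N IH] h.
  by apply: sume_ge0 => t _; apply: uE_ge0.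
rewrite [ETotalN _ _ _ N.+1 _]/=.
case E: (last_state h) => [|q rest]; first by rewrite big_ord0 big_nil.
rewrite big_ord_recl [X in (_ + X)%R]big1 ?addr0; last first.
  by move=> j _; apply: big1 => a _; rewrite /static_strategy E /= mul0r.
rewrite (bigD1 (s q)) //= [X in (_ + X)%R]big1 ?addr0; last first.
  by move=> a /negbTE H; rewrite /static_strategy E /= H mul0r.
rewrite /static_strategy E /= ?eqxx mul1r (tnth_nth q) /=.
case E2: (p q (s q)) (Hs q) => [d|] // _.
have Sr0 : 0 <= \sum_(t <- rest) uE t by apply: sume_ge0 => t _; apply: uE_ge0.
rewrite big_cons.
have [Eq|Fq] := eqVneq (uE q) +oo.
  by rewrite Eq addye ?leey // gt_eqF // (lt_le_trans _ Sr0) ?ltNye.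
have H2 := Hs2 _ _ E2 Fq.
rewrite EFinD -sumEFin.
apply: le_trans (_ : _ <= (c q (s q))%:E + \sum_(x <- d) (x.1)%:E *
   (\sum_(t <- x.2) uE t + \sum_(t <- rest) uE t)) _.
  apply: leeD2l; rewrite big_seq [X in _ <= X]big_seq; apply: lee_sum => x xd.
  rewrite EFinM; apply: lee_wpmul2l; first by rewrite lee_fin; apply: wf_w _ _ _ _ E2 xd.
  have := IH (extend h (0%N, s q) (succ_state (q :: rest) 0 x.2)).
  by rewrite last_extend /succ_state /= drop0 big_cat.
have -> : \sum_(x <- d) (x.1)%:E * (\sum_(t <- x.2) uE t + \sum_(t <- rest) uE t) =
   \sum_(x <- d) (x.1)%:E * \sum_(t <- x.2) uE t + \sum_(t <- rest) uE t.
  rewrite big_seq; under eq_bigr => x xd.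
    rewrite ge0_muleDr //; last by apply: sume_ge0 => t _; apply: uE_ge0.
    over.
  rewrite big_split /= -big_seq; congr (_ + _).
  rewrite -ge0_sume_distrl; last by move=> x xd; rewrite lee_fin; apply: (wf_w _ _ _ _ E2).
  by rewrite sumEFin -big_seq (wf_sum _ _ _ E2) mul1e.
by rewrite addeA; apply: leeD2r.
Qed.

End Static.


Local Open Scope classical_set_scope.

Lemma cvge_sum (I : eqType) (s : seq I) (f : I -> nat -> \bar R) (l : I -> \bar R) :
  (forall i, i \in s -> 0 <= l i) -> (forall i, i \in s -> f i n @[n --> \oo] --> l i) ->
  \sum_(i <- s) f i n @[n --> \oo] --> \sum_(i <- s) l i.
Proof.
elim: s => [|x s IH] H0 Hc.
  by rewrite big_nil; under eq_fun do rewrite big_nil; exact: cvg_cst.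
rewrite big_cons; under eq_fun do rewrite big_cons.
apply: cvgeD.
- apply: ge0_adde_def; rewrite inE; first by apply: H0; rewrite mem_head.
  by rewrite big_seq; apply: sume_ge0 => i iS; apply: H0; rewrite in_cons iS orbT.
- by apply: Hc; rewrite mem_head.
- by apply: IH => i iS; [apply: H0 | apply: Hc]; rewrite in_cons iS orbT.
Qed.

Lemma gval_cvg q a d : p q a = Some d ->
  (gval (uk n) q a)%:E @[n --> \oo] -->
  ((c q a)%:E + \sum_(x <- d) (x.1)%:E * \sum_(t <- x.2) uE t).
Proof.
move=> E; rewrite /gval E.
have -> : (fun n => (c q a + \sum_(x <- d) x.1 * \sum_(t <- x.2) uk n t)%R%:E) =
    (fun n => (c q a)%:E + \sum_(x <- d) (x.1)%:E * \sum_(t <- x.2) (uk n t)%:E).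
  apply: funext => n; rewrite EFinD -sumEFin; congr (_ + _).
  by apply: eq_bigr => x _; rewrite EFinM sumEFin.
apply: cvgeD.
- apply: ge0_adde_def; rewrite inE; first by rewrite lee_fin; apply: ltW; apply: wf_c.
  rewrite big_seq; apply: sume_ge0 => x xd; apply: mule_ge0.
    by rewrite lee_fin; apply: wf_w _ _ _ _ E xd.
  by apply: sume_ge0 => t _; apply: uE_ge0.
- exact: cvg_cst.
apply: cvge_sum.
  move=> x xd; apply: mule_ge0; first by rewrite lee_fin; apply: wf_w _ _ _ _ E xd.
  by apply: sume_ge0 => t _; apply: uE_ge0.
move=> x xd; apply: cvgeZl => //.
apply: cvge_sum; first by move=> t _; apply: uE_ge0.
move=> t _; exact: uE_cvg.
Qed.

Lemma choice_ex q : exists a, isSome (p q a) /\ forall d, p q a = Some d ->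
  uE q != +oo ->
  (c q a)%:E + \sum_(x <- d) (x.1)%:E * \sum_(t <- x.2) uE t <= uE q.
Proof.
have [Eq|Fq] := eqVneq (uE q) +oo.
  by exists (a0 q); split; [apply: a0S | move=> d _; rewrite Eq].
have /fineK Er : uE q \is a fin_num.
  by rewrite ge0_fin_numE ?uE_ge0 // lt_neqAle Fq leey.
set r := fine (uE q) in Er.
apply: contrapT => Hno.
have Hn : forall a, exists n, isSome (p q a) -> (r < gval (uk n) q a)%R.
  move=> a; case Ea: (p q a) => [d|]; last by exists 0%N.
  case: (pselect (exists n, (r < gval (uk n) q a)%R)) => [[n Hn]|Hnn].
    by exists n; rewrite -Ea.
  exfalso; apply: Hno; exists a; split; first by rewrite Ea.
  move=> d' Ed' _; have dd : d = d' by move: Ea; rewrite Ed' => -[].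
  rewrite -Er; have := gval_cvg _ _ _ Ed'; move/(cvg_lim (@ereal_hausdorff R)) => <-.
  apply: lime_le; first by apply: ereal_nondecreasing_is_cvgn => n m nm;
    rewrite lee_fin; apply: gval_mono => t; apply: uk_mono.
  exists 0%N => // n _ /=; rewrite lee_fin leNgt; apply/negP => H.
  by apply: Hnn; exists n.
have [n_ Hn_] := choice Hn.
set K := (\max_(a : A) n_ a)%N.
have : (r < uk K.+1 q)%R.
  apply: uk_gt => a Ha; apply: lt_le_trans (Hn_ a Ha) _.
  by apply: gval_mono => t; apply: uk_mono; apply: leq_bigmax.
rewrite ltNge => /negP; apply; rewrite -lee_fin Er; exact: uk_le_uE.
Qed.

End Proof.

Theorem corollary1 (R : realType) (T A : finType)
    (p : T -> A -> option (fdist R T)) (c : T -> A -> R) :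
  BMDP_wf p c ->
  exists s : T -> A,
    static_choice p s /\
    forall q : T,
      ETotal_star p c (@static_strategy R T A s) [:: q] = ETotal_opt p c [:: q].
Proof.
move=> wf.
have [a0 a0P] : {a0 : T -> A & forall q, p q (a0 q) <> None}.
  by case: wf => _ H _; exact: (boolp.choice H).
have [s Hs] := boolp.choice (choice_ex _ _ _ _ _ wf a0 a0P).
exists s; split.
  by move=> q; case: (Hs q) => H _; move: H; case: (p q (s q)).
have Hs1 : forall q, isSome (p q (s q)) by move=> q; case: (Hs q).
have Hs2 := fun q => proj2 (Hs q).
have v := static_valid _ _ _ _ _ Hs1.
move=> q; apply/eqP; rewrite eq_le; apply/andP; split; last first.
  by apply: ereal_inf_lbound; exists (@static_strategy R T A s).
apply: le_trans (_ : (_ <= uE R T A p c a0 q)%E) _.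
  apply: lime_le; first exact: ET_cvg.
  exists 0%N => // N _ /=.
  have := static_ub _ _ _ _ _ wf a0 a0P s Hs1 Hs2 N ([:: q], [::]).
  by rewrite big_seq1.
apply/ereal_infP => y [sigma vs <-].
exact: (lower_star _ _ _ _ _ wf a0 a0P).
Qed.
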